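(* Let $H\in M_N(\mathbb C)$ be a complex Hadamard matrix with rows $H_1,\dots,H_N\in\mathbb T^N$. Define $U_{ij}\in M_N(\mathbb C)$ as the orthogonal projection onto $\mathbb C\cdot(H_i/H_j)$ (coordinatewise quotient). Then $$U_{ij}=\frac{1}{N}\left(\frac{H_{ik}H_{jl}}{H_{il}H_{jk}}\right)_{kl},$$ the matrix $U=(U_{ij})$ is magic, the matrix $U'$ defined by $(U'_{ij})_{kl}=(U_{kl})_{ij}$ is magic as well (so $U$ is a projective model), and $U'(H)=U(H^t)$.
   Context: A complex Hadamard matrix is an $N\times N$ matrix with all entries of modulus $1$ and pairwise orthogonal rows. A square matrix of operators is magic if its entries are orthogonal projections and each row and column sums to $1$. $U(H)$ denotes the matrix $(U_{ij})$ constructed from $H$ as in the statement. *)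

(* Defs.v *)
From HB Require Import structures.
From mathcomp Require Import all_boot all_order all_algebra.
Set Implicit Arguments. Unset Strict Implicit. Unset Printing Implicit Defensive.
Import Order.TTheory GRing.Theory Num.Theory.
Local Open Scope ring_scope.

Definition adjmx (C : numClosedFieldType) (m n : nat) (A : 'M[C]_(m, n)) : 'M[C]_(n, m) :=
  (map_mx Num.conj A)^T.

Definition complex_hadamard (C : numClosedFieldType) (N : nat) (H : 'M[C]_N) : Prop :=
  (forall i j, `|H i j| = 1) /\
  (forall i j : 'I_N, i != j -> \sum_(k < N) H i k * (H j k)^* = 0).

Definition is_orth_proj (C : numClosedFieldType) (N : nat) (P : 'M[C]_N) : Prop :=
  P *m P = P /\ adjmx P = P.

(* P is the orthogonal projection onto the line C.v : an orthogonal projection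
   whose range (column space, i.e. row space of P^T) equals span v. *)
Definition is_orth_proj_onto (C : numClosedFieldType) (N : nat)
    (P : 'M[C]_N) (v : 'rV[C]_N) : Prop :=
  is_orth_proj P /\ (P^T == v)%MS.

Definition row_quot (C : numClosedFieldType) (N : nat) (H : 'M[C]_N) (i j : 'I_N)
  : 'rV[C]_N := \row_k (H i k / H j k).

Definition is_U_of (C : numClosedFieldType) (N : nat) (H : 'M[C]_N)
    (U : 'I_N -> 'I_N -> 'M[C]_N) : Prop :=
  forall i j, is_orth_proj_onto (U i j) (row_quot H i j).

Definition magic (C : numClosedFieldType) (N : nat) (U : 'I_N -> 'I_N -> 'M[C]_N) : Prop :=
  (forall i j, is_orth_proj (U i j)) /\
  (forall i, \sum_(j < N) U i j = 1%:M) /\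
  (forall j, \sum_(i < N) U i j = 1%:M).

Definition Uprime (C : numClosedFieldType) (N : nat) (U : 'I_N -> 'I_N -> 'M[C]_N)
  : 'I_N -> 'I_N -> 'M[C]_N := fun i j => \matrix_(k, l) U k l i j.

(* Main.v *)
Require Import Defs.
From HB Require Import structures.
From mathcomp Require Import all_boot all_order all_algebra.
From mathcomp Require Import ring.
From Stdlib Require Import FunctionalExtensionality.
Import Order.TTheory GRing.Theory Num.Theory.
Local Open Scope ring_scope.

Lemma proj_line (C : numClosedFieldType) (N : nat) (P : 'M[C]_N) (v : 'rV[C]_N) (k0 : 'I_N) :
  (forall k, `|v 0 k| = 1) -> is_orth_proj_onto P v ->
  forall k l, P k l = N%:R^-1 * (v 0 k * (v 0 l)^*).
Proof.
move=> nv [[PP aP] /andP[s1 s2]].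
have [D PD] := submxP s1.
have [E vE] := submxP s2.
have Pkl k l : P k l = v 0 k * D l 0.
  by have := congr1 (fun M : 'M_N => M l k) PD; rewrite !mxE big_ord1 mulrC.
have vnz k : v 0 k != 0 by rewrite -normr_eq0 nv oner_eq0.
have Pv : P *m v^T = v^T by rewrite vE trmx_mul trmxK mulmxA PP.
set s := \sum_l D l 0 * v 0 l.
have s1' : s = 1.
  have := congr1 (fun M : 'cV_N => M k0 0) Pv.
  rewrite !mxE.
  under eq_bigr => l _ do rewrite Pkl mxE -mulrA.
  rewrite -mulr_sumr -[X in _ = X]mulr1 => /mulfI; apply; exact: vnz.
have Nn : N%:R != 0 :> C by rewrite pnatr_eq0 -lt0n (leq_ltn_trans _ (ltn_ord k0)).
have sumN : \sum_l (v 0 l)^* * v 0 l = N%:R.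
  under eq_bigr => l _ do rewrite mulrC -normCK nv expr1n.
  by rewrite sumr_const card_ord.
have cr k : (D k 0)^* = N%:R^-1 * v 0 k.
  apply: (mulfI Nn); rewrite mulrA mulfV // mul1r -{1}sumN mulr_suml -[v 0 k]mulr1 -s1' mulr_sumr.
  apply: eq_bigr => l _.
  have := congr1 (fun M : 'M_N => M k l) aP; rewrite !mxE => e.
  by rewrite mulrAC -rmorphM /= -Pkl e Pkl mulrA.
move=> k l; rewrite Pkl.
rewrite -[D l 0]conjCK cr rmorphM /= fmorphV /= conjC_nat.
by rewrite mulrCA.
Qed.

Lemma conj1 (C : numClosedFieldType) (x : C) : `|x| = 1 -> x^* = x^-1.
Proof. by move=> h; rewrite invC_norm h expr1n invr1 mul1r. Qed.

Lemma had_col (C : numClosedFieldType) (N : nat) (H : 'M[C]_N) :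
  complex_hadamard H -> forall k l : 'I_N,
  \sum_j H j l * (H j k)^* = (k == l)%:R * N%:R.
Proof.
move=> [nH oH] k l.
have Nn : N%:R != 0 :> C by rewrite pnatr_eq0 -lt0n (leq_ltn_trans _ (ltn_ord k)).
have HB : H *m adjmx H = N%:R%:M.
  apply/matrixP => i j; rewrite !mxE.
  under eq_bigr => t _ do rewrite !mxE.
  have [<-|ne] := eqVneq i j; last by rewrite oH // mulr0n.
  under eq_bigr => t _ do rewrite -normCK nH expr1n.
  by rewrite sumr_const card_ord mulr1n.
have : (N%:R^-1 *: H) *m adjmx H = 1%:M.
  by rewrite -scalemxAl HB -scalemx1 scalerA mulVf // scalemx1.
move/mulmx1C/matrixP/(_ k l); rewrite !mxE.
under eq_bigr => t _ do rewrite !mxE.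
move=> e; rewrite -e mulr_suml; apply: eq_bigr => t _.
by field.
Qed.

Lemma hadT (C : numClosedFieldType) (N : nat) (H : 'M[C]_N) :
  complex_hadamard H -> complex_hadamard H^T.
Proof.
move=> hH; have [nH _] := hH; split; first by move=> i j; rewrite mxE.
move=> i j ne; under eq_bigr => t _ do rewrite !mxE.
by rewrite had_col // eq_sym (negbTE ne) mul0r.
Qed.

Lemma formula (C : numClosedFieldType) (N : nat) (H : 'M[C]_N)
    (U : 'I_N -> 'I_N -> 'M[C]_N) :
  complex_hadamard H -> is_U_of H U ->
  forall i j k l, U i j k l = N%:R^-1 * ((H i k * H j l) / (H i l * H j k)).
Proof.
move=> [nH oH] hU i j k l.
have nz a b : H a b != 0 by rewrite -normr_eq0 nH oner_eq0.
rewrite (@proj_line _ _ _ _ i _ (hU i j)); last by move=> t; rewrite mxE normf_div !nH divr1.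
rewrite !mxE rmorphM /= fmorphV /= !conj1 // invrK.
by rewrite invfM; ring.
Qed.

Lemma magicU (C : numClosedFieldType) (N : nat) (H : 'M[C]_N)
    (U : 'I_N -> 'I_N -> 'M[C]_N) :
  complex_hadamard H -> is_U_of H U -> magic U.
Proof.
move=> hH hU; have [nH oH] := hH.
have nz a b : H a b != 0 by rewrite -normr_eq0 nH oner_eq0.
have Nn (k : 'I_N) : N%:R != 0 :> C by rewrite pnatr_eq0 -lt0n (leq_ltn_trans _ (ltn_ord k)).
split; first by move=> i j; case: (hU i j).
split.
- move=> i; apply/matrixP => k l; rewrite summxE.
  under eq_bigr => j _ do rewrite (@formula _ _ _ _ hH hU).
  have -> : \sum_j N%:R^-1 * (H i k * H j l / (H i l * H j k)) =
     N%:R^-1 * (H i k / H i l) * \sum_j H j l * (H j k)^*.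
    rewrite mulr_sumr; apply: eq_bigr => j _; rewrite conj1 // invfM; ring.
  rewrite had_col // !mxE; have [<-|ne] := eqVneq k l; last by rewrite mul0r mulr0.
  by rewrite mulfV // mulr1 mul1r mulVf // (Nn k).
- move=> j; apply/matrixP => k l; rewrite summxE.
  under eq_bigr => i _ do rewrite (@formula _ _ _ _ hH hU).
  have -> : \sum_i N%:R^-1 * (H i k * H j l / (H i l * H j k)) =
     N%:R^-1 * (H j l / H j k) * \sum_i H i k * (H i l)^*.
    rewrite mulr_sumr; apply: eq_bigr => i _; rewrite conj1 // invfM; ring.
  rewrite had_col // !mxE; have [<-|ne] := eqVneq k l; last by rewrite mul0r mulr0.
  by rewrite mulfV // mulr1 mul1r mulVf // (Nn k).
Qed.

Theorem proposition2p3 (C : numClosedFieldType) (N : nat) (H : 'M[C]_N)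
    (U V : 'I_N -> 'I_N -> 'M[C]_N) :
  complex_hadamard H ->
  is_U_of H U ->
  is_U_of H^T V ->
  (forall i j k l, U i j k l = N%:R^-1 * ((H i k * H j l) / (H i l * H j k))) /\
  magic U /\
  magic (Uprime U) /\
  Uprime U = V.
Proof.
move=> hH hU hV.
have hT := @hadT _ _ _ hH.
have eq : Uprime U = V.
  apply: functional_extensionality_dep => i; apply: functional_extensionality_dep => j.
  apply/matrixP => k l; rewrite mxE (@formula _ _ _ _ hH hU) (@formula _ _ _ _ hT hV) !mxE.
  by rewrite [H l i * _]mulrC.
split; first exact: (@formula _ _ _ _ hH hU).
split; first exact: (@magicU _ _ _ _ hH hU).
by rewrite eq; split => //; exact: (@magicU _ _ _ _ hT hV).
Qed.
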